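(* Any pseudo $H$-type algebra $\mathfrak n=\mathfrak n_{-2}\oplus\mathfrak n_{-1}$ with $\dim\mathfrak n_{-2}\geq 3$ is rigid.
   Context: A graded 2-step nilpotent Lie algebra $\mathfrak n=\mathfrak n_{-2}\oplus\mathfrak n_{-1}$ has $[\mathfrak n_{-1},\mathfrak n_{-1}]=\mathfrak n_{-2}$ and $\mathfrak n_{-2}$ central. A real $M$-type algebra is such a real $\mathfrak n$ with a non-degenerate symmetric bilinear form $\langle\cdot,\cdot\rangle$ whose restriction to $\mathfrak n_{-2}$ is non-degenerate and with $\mathfrak n_{-2}\perp\mathfrak n_{-1}$. The $J$-map $J\colon\mathfrak n_{-2}\to\operatorname{End}(\mathfrak n_{-1})$ is defined by $\langle J_zx,y\rangle=\langle z,[x,y]\rangle$ for $x,y\in\mathfrak n_{-1}$, $z\in\mathfrak n_{-2}$. The algebra is of pseudo $H$-type if $J_{z}J_{w}+J_{w}J_{z}=-2\langle z,w\rangle\,\mathrm{Id}_{\mathfrak n_{-1}}$ for all $z,w\in\mathfrak n_{-2}$. The Tanaka prolongation of $\mathfrak n$ is the maximal graded Lie algebra $\hat{\mathfrak n}=\bigoplus_{i\ge -2}\hat{\mathfrak n}_i$ with negative part equal to $\mathfrak n$ such that for $k\ge0$ any $X\in\hat{\mathfrak n}_k$ with $[X,\mathfrak n_{-1}]=0$ is zero; $\mathfrak n$ is rigid if $\hat{\mathfrak n}$ is finite dimensional. *)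

(* Defs.v *)
From HB Require Import structures.
From mathcomp Require Import all_boot all_order all_algebra.
From mathcomp Require Import reals.
Unset Strict Implicit. Unset Printing Implicit Defensive.
Import Order.TTheory GRing.Theory Num.Theory.
Local Open Scope ring_scope.

(* Conventions.
   n_{-1} = 'rV[R]_m  (row vectors),  n_{-2} = 'rV[R]_q.
   The bracket [n_{-1}, n_{-1}] -> n_{-2} is  br : 'rV_m -> 'rV_m -> 'rV_q ;
   n_{-2} is central, so all other brackets in n vanish.
   The inner product on n = n_{-1} (+) n_{-2} with n_{-2} ⊥ n_{-1} is
   block-diagonal:  <(x,z),(x',z')> = x gV x'^T + z gZ z'^T. *)

Section Defs.
Variables (R : realType) (m q : nat).
Variable br : 'rV[R]_m -> 'rV[R]_m -> 'rV[R]_q.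

Definition graded_2step : Prop :=
  (forall (a : R) x x' y, br (a *: x + x') y = a *: br x y + br x' y) /\
  (forall x y, br x y = - br y x) /\
  (* [n_{-1}, n_{-1}] = n_{-2}: brackets span n_{-2} *)
  (forall z : 'rV[R]_q, exists s : seq (R * 'rV[R]_m * 'rV[R]_m),
      z = \sum_(p <- s) p.1.1 *: br p.1.2 p.2).

Variables (gV : 'M[R]_m) (gZ : 'M[R]_q).

Definition form_n : 'M[R]_(m + q) := block_mx gV 0 0 gZ.

Definition Mtype : Prop :=
  graded_2step /\ form_n^T = form_n /\ form_n \in unitmx /\ gZ \in unitmx.

Definition ipZ (z w : 'rV[R]_q) : R := (z *m gZ *m w^T) 0 0.

(* J_z, acting on row vectors by x |-> x *m Jmap z; it is the unique map with
   <J_z x, y> = <z, [x, y]> (gV invertible). *)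
Definition Jmap (z : 'rV[R]_q) : 'M[R]_m :=
  (\matrix_(i < m, j < m) ipZ z (br (delta_mx 0 i) (delta_mx 0 j))) *m invmx gV.

Definition pseudo_Htype : Prop :=
  Mtype /\
  forall z w : 'rV[R]_q,
    Jmap z *m Jmap w + Jmap w *m Jmap z = (- (2%:R * ipZ z w)) %:M.

(* ---------- Tanaka prolongation (standard inductive construction) ----------
   lvl n is the ambient space of the degree (n-2) component:
     lvl 0 = n_{-2},  lvl 1 = n_{-1},
     lvl (k+2) = Hom(n_{-1}, g_{k-1}) x Hom(n_{-2}, g_{k-2})  (as functions). *)
Fixpoint lvl (n : nat) : Type :=
  match n with
  | 0 => 'rV[R]_q
  | S p => match p with
           | 0 => 'rV[R]_m
           | S k => (('rV[R]_m -> lvl p) * ('rV[R]_q -> lvl k))%type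
           end
  end.

Fixpoint lzero2 (n : nat) : lvl n * lvl n.+1 :=
  match n return lvl n * lvl n.+1 with
  | 0 => (0, 0)
  | S k => let r := lzero2 k in
           (r.2, ((fun _ => r.2), (fun _ => r.1)) : lvl k.+2)
  end.
Definition lzero (n : nat) : lvl n := (lzero2 n).1.

Fixpoint ladd2 (n : nat) :
    (lvl n -> lvl n -> lvl n) * (lvl n.+1 -> lvl n.+1 -> lvl n.+1) :=
  match n return (lvl n -> lvl n -> lvl n) * (lvl n.+1 -> lvl n.+1 -> lvl n.+1) with
  | 0 => (fun u v => u + v, fun u v => u + v)
  | S k => let r := ladd2 k in
           (r.2, fun (u v : lvl k.+2) =>
              ((fun x => r.2 (u.1 x) (v.1 x)), (fun z => r.1 (u.2 z) (v.2 z))) : lvl k.+2)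
  end.
Definition ladd (n : nat) : lvl n -> lvl n -> lvl n := (ladd2 n).1.

Fixpoint lscale2 (n : nat) (a : R) : (lvl n -> lvl n) * (lvl n.+1 -> lvl n.+1) :=
  match n return (lvl n -> lvl n) * (lvl n.+1 -> lvl n.+1) with
  | 0 => (fun u => a *: u, fun u => a *: u)
  | S k => let r := lscale2 k a in
           (r.2, fun (u : lvl k.+2) =>
              ((fun x => r.2 (u.1 x)), (fun z => r.1 (u.2 z))) : lvl k.+2)
  end.
Definition lscale (n : nat) (a : R) : lvl n -> lvl n := (lscale2 n a).1.

Definition lopp (n : nat) (u : lvl n) : lvl n := lscale n (-1) u.

(* bracket [w, y] of w in g_{n-1} with y in n_{-1}, landing in g_{n-2} *)
Definition bV (n : nat) : lvl n.+1 -> 'rV[R]_m -> lvl n :=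
  match n return lvl n.+1 -> 'rV[R]_m -> lvl n with
  | 0 => fun w y => br w y
  | S k => fun w y => w.1 y
  end.

Definition linV (n : nat) (f : 'rV[R]_m -> lvl n) : Prop :=
  forall (a : R) x y, f (a *: x + y) = ladd n (lscale n a (f x)) (f y).
Definition linZ (n : nat) (f : 'rV[R]_q -> lvl n) : Prop :=
  forall (a : R) x y, f (a *: x + y) = ladd n (lscale n a (f x)) (f y).

(* derivation rule  u[x,y] = [u x, y] + [x, u y]  for u of degree k >= 0 *)
Definition derVV (k : nat) (u : lvl k.+2) : Prop :=
  forall x y : 'rV[R]_m,
    u.2 (br x y) = ladd k (bV k (u.1 x) y) (lopp k (bV k (u.1 y) x)).
(* x in n_{-1}, z in n_{-2}  (u[x,z] = 0); trivial in degree 0 *)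
Definition derVZ (k : nat) : lvl k.+2 -> Prop :=
  match k return lvl k.+2 -> Prop with
  | 0 => fun _ => True
  | S j => fun u => forall x z, (u.1 x).2 z = bV j (u.2 z) x
  end.
(* z, z' in n_{-2}  (u[z,z'] = 0); trivial in degrees 0, 1 *)
Definition derZZ (k : nat) : lvl k.+2 -> Prop :=
  match k return lvl k.+2 -> Prop with
  | 0 => fun _ => True
  | 1 => fun _ => True
  | S (S j) => fun u => forall z z', (u.2 z).2 z' = (u.2 z').2 z
  end.

(* membership in the Tanaka prolongation: inP (k+2) u  <->  u in g_k;
   defined by simultaneous recursion on (n, n+1) *)
Definition inStep (k : nat) (P : lvl k -> Prop) (Q : lvl k.+1 -> Prop)
    (u : lvl k.+2) : Prop :=
  [/\ linV k.+1 u.1, linZ k u.2,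
      (forall x, Q (u.1 x)), (forall z, P (u.2 z)) &
      [/\ derVV k u, derVZ k u & derZZ k u]].

Fixpoint inP2 (n : nat) : (lvl n -> Prop) * (lvl n.+1 -> Prop) :=
  match n return (lvl n -> Prop) * (lvl n.+1 -> Prop) with
  | 0 => (fun _ => True, fun _ => True)
  | S k => let r := inP2 k in (r.2, inStep k r.1 r.2)
  end.
Definition inP (n : nat) : lvl n -> Prop := (inP2 n).1.

Definition tanaka (k : nat) : lvl k.+2 -> Prop := inP k.+2.

(* rigid: the prolongation is finite dimensional, i.e. (each g_k being finite
   dimensional) only finitely many components g_k are nonzero. *)
Definition rigid : Prop :=
  exists N : nat, forall k : nat, (N <= k)%N ->
    forall u : lvl k.+2, tanaka k u -> u = lzero k.+2.

End Defs.

(* Main.v *)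
Require Import Defs.
From HB Require Import structures.
From mathcomp Require Import all_boot all_order all_algebra.
From mathcomp Require Import reals.
From Stdlib Require Import Classical FunctionalExtensionality.
From mathcomp Require Import ring lra.
Import GRing.Theory Num.Theory.
Local Open Scope ring_scope.
Set Implicit Arguments. Unset Strict Implicit. Unset Printing Implicit Defensive.

Definition bf (F : comPzRingType) n (G : 'M[F]_n) (u w : 'rV[F]_n) : F :=
  (u *m G *m w^T) 0 0.

Section BF.
Variables (F : fieldType) (n : nat) (G : 'M[F]_n).

Lemma bfE u w : bf G u w = \sum_j (u *m G) 0 j * w 0 j.
Proof. by rewrite /bf mxE; apply: eq_bigr => j _; rewrite [w^T _ _]mxE. Qed.

Lemma bfDr u (a : F) w w' : bf G u (a *: w + w') = a * bf G u w + bf G u w'.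
Proof.
rewrite !bfE mulr_sumr -big_split /=; apply: eq_bigr => j _.
by rewrite !mxE mulrDr mulrCA.
Qed.

Lemma bfDl (a : F) u u' w : bf G (a *: u + u') w = a * bf G u w + bf G u' w.
Proof.
rewrite !bfE mulr_sumr -big_split /=; apply: eq_bigr => j _.
by rewrite mulmxDl -scalemxAl !mxE mulrDl mulrA.
Qed.

Lemma bf0r u : bf G u 0 = 0.
Proof. by rewrite bfE big1 // => j _; rewrite !mxE mulr0. Qed.
Lemma bf0l u : bf G 0 u = 0.
Proof. by rewrite bfE big1 // => j _; rewrite mul0mx mxE mul0r. Qed.
Lemma bfZr u (a : F) w : bf G u (a *: w) = a * bf G u w.
Proof. by rewrite -[a *: w]addr0 bfDr bf0r addr0. Qed.
Lemma bfZl (a : F) u w : bf G (a *: u) w = a * bf G u w.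
Proof. by rewrite -[a *: u]addr0 bfDl bf0l addr0. Qed.
Lemma bfNr u w : bf G u (- w) = - bf G u w.
Proof. by rewrite -scaleN1r bfZr mulN1r. Qed.
Lemma bfNl u w : bf G (- u) w = - bf G u w.
Proof. by rewrite -scaleN1r bfZl mulN1r. Qed.
Lemma bfAr u w w' : bf G u (w + w') = bf G u w + bf G u w'.
Proof. by rewrite -[w]scale1r bfDr mul1r scale1r. Qed.
Lemma bfAl u u' w : bf G (u + u') w = bf G u w + bf G u' w.
Proof. by rewrite -[u]scale1r bfDl mul1r scale1r. Qed.
Lemma bfBr u w w' : bf G u (w - w') = bf G u w - bf G u w'.
Proof. by rewrite bfAr bfNr. Qed.
Lemma bfBl u u' w : bf G (u - u') w = bf G u w - bf G u' w.
Proof. by rewrite bfAl bfNl. Qed.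

Lemma bf_suml I (r : seq I) (P : pred I) (c : I -> F) (s : I -> 'rV_n) w :
  bf G (\sum_(i <- r | P i) c i *: s i) w = \sum_(i <- r | P i) c i * bf G (s i) w.
Proof.
apply: (big_rec2 (fun x y => bf G x w = y)); first exact: bf0l.
by move=> i y1 y2 _ <-; rewrite bfDl.
Qed.

Lemma bf_sym u w : G^T = G -> bf G u w = bf G w u.
Proof.
move=> GT; rewrite /bf [LHS](_ : _ = (u *m G *m w^T)^T 0 0); last by rewrite [RHS]mxE.
by rewrite !trmx_mul trmxK GT mulmxA.
Qed.

Lemma bf_nondeg u : G \in unitmx -> (forall w, bf G u w = 0) -> u = 0.
Proof.
move=> GU H; have uG0 : u *m G = 0.
  apply/rowP => j; rewrite mxE; have := H (delta_mx 0 j).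
  rewrite bfE (bigD1 j) //= big1 => [|k kj]; last first.
    by rewrite [delta_mx _ _ _ _]mxE (negbTE kj) andbF mulr0.
  by rewrite !mxE !eqxx mulr1 addr0.
by rewrite -(mulmxK GU u) uG0 mul0mx.
Qed.

End BF.

Lemma span_bound (F : fieldType) n k (S : 'M[F]_(k, n)) :
  (forall x : 'rV_n, exists c : 'rV_k, x = c *m S) -> (n <= k)%N.
Proof.
move=> H; have sub : (1%:M <= S)%MS.
  apply/row_subP => i; apply/submxP; have [c ->] := H (row i 1%:M); by exists c.
have := mxrankS sub; rewrite mxrank1 => h.
exact: leq_trans h (rank_leq_row S).
Qed.

Lemma exists_orth (F : fieldType) (n k : nat) (G : 'M[F]_n) (s : 'I_k -> 'rV_n) :
  G^T = G -> G \in unitmx -> (2%:R : F) != 0 -> (k < n)%N ->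
  (forall i, bf G (s i) (s i) != 0) ->
  (forall i j, i != j -> bf G (s i) (s j) = 0) ->
  exists t, bf G t t != 0 /\ forall i, bf G t (s i) = 0.
Proof.
move=> GT GU two kn nn orth.
pose c x i := bf G x (s i) / bf G (s i) (s i).
pose P x := x - \sum_i c x i *: s i.
have HP x i : bf G (P x) (s i) = 0.
  rewrite bfBl bf_suml (bigD1 i) //= big1 => [|j ji]; last first.
    by rewrite orth ?mulr0 // eq_sym.
  by rewrite addr0 /c mulfVK ?subrr.
apply: NNPP => Hn.
have W0 t : (forall i, bf G t (s i) = 0) -> bf G t t = 0.
  move=> Ht; case: (eqVneq (bf G t t) 0) => // Htt.
  by case: Hn; exists t; split.
have Wuw u w : (forall i, bf G u (s i) = 0) -> (forall i, bf G w (s i) = 0) ->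
    bf G u w = 0.
  move=> Hu Hw.
  have Huw : forall i, bf G (u + w) (s i) = 0 by move=> i; rewrite bfAl Hu Hw addr0.
  have := W0 _ Huw; rewrite bfAl !bfAr (W0 _ Hu) (W0 _ Hw) add0r addr0.
  rewrite (bf_sym _ _ GT) => /eqP; rewrite -mulr2n -mulr_natr mulf_eq0 (negbTE two) orbF.
  by move/eqP.
have P0 x : P x = 0.
  apply: (bf_nondeg GU) => y.
  have -> : y = P y + \sum_i c y i *: s i by rewrite /P subrK.
  rewrite bfAr Wuw ?HP // add0r (bf_sym _ _ GT) bf_suml big1 // => i _.
  by rewrite (bf_sym _ _ GT) HP mulr0.
have : (n <= k)%N.
  apply: (span_bound (S := \matrix_(i < k) s i)) => x.
  exists (\row_i c x i); rewrite mulmx_sum_row.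
  have := P0 x. rewrite /P. move/eqP. rewrite subr_eq0. move/eqP => {1}->.
  by apply: eq_bigr => i _; rewrite rowK mxE.
by rewrite leqNgt kn.
Qed.

Section Basic.
Variables (R : realType) (m q : nat).
Variable br : 'rV[R]_m -> 'rV[R]_m -> 'rV[R]_q.
Variables (gV : 'M[R]_m) (gZ : 'M[R]_q).
Hypothesis HH : @pseudo_Htype R m q br gV gZ.

Let G2 := proj1 (proj1 HH).
Let HMt := proj1 HH.

Lemma brD (a : R) x x' y : br (a *: x + x') y = a *: br x y + br x' y.
Proof. by case: G2 => H _; apply: H. Qed.
Lemma brN x y : br x y = - br y x.
Proof. by case: G2 => _ [H _]; apply: H. Qed.
Lemma br_span (z : 'rV[R]_q) : exists s : seq (R * 'rV[R]_m * 'rV[R]_m),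
      z = \sum_(p <- s) p.1.1 *: br p.1.2 p.2.
Proof. by case: G2 => _ [_ H]; apply: H. Qed.

Lemma br0l y : br 0 y = 0.
Proof.
by have := brD (-1) 0 0 y; rewrite !scaleN1r oppr0 addr0 addNr.
Qed.
Lemma br0r x : br x 0 = 0.
Proof. by rewrite brN br0l oppr0. Qed.
Lemma brZl (a : R) x y : br (a *: x) y = a *: br x y.
Proof. by rewrite -[a *: x]addr0 brD br0l addr0. Qed.
Lemma brAl x x' y : br (x + x') y = br x y + br x' y.
Proof. by rewrite -[x]scale1r brD !scale1r. Qed.
Lemma brNl x y : br (- x) y = - br x y.
Proof. by rewrite -scaleN1r brZl scaleN1r. Qed.
Lemma brBl x x' y : br (x - x') y = br x y - br x' y.
Proof. by rewrite brAl brNl. Qed.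
Lemma brZr (a : R) x y : br x (a *: y) = a *: br x y.
Proof. by rewrite brN brZl -scalerN -brN. Qed.
Lemma brAr x y y' : br x (y + y') = br x y + br x y'.
Proof. by rewrite brN brAl opprD -!brN. Qed.
Lemma brNr x y : br x (- y) = - br x y.
Proof. by rewrite -scaleN1r brZr scaleN1r. Qed.
Lemma brBr x y y' : br x (y - y') = br x y - br x y'.
Proof. by rewrite brAr brNr. Qed.

Lemma br_suml I (r : seq I) (P : pred I) (c : I -> R) (s : I -> 'rV_m) y :
  br (\sum_(i <- r | P i) c i *: s i) y = \sum_(i <- r | P i) c i *: br (s i) y.
Proof.
apply: (big_rec2 (fun x w => br x y = w)); first exact: br0l.
by move=> i y1 y2 _ <-; rewrite brD.
Qed.
Lemma br_sumr I (r : seq I) (P : pred I) (c : I -> R) (s : I -> 'rV_m) x :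
  br x (\sum_(i <- r | P i) c i *: s i) = \sum_(i <- r | P i) c i *: br x (s i).
Proof.
rewrite brN br_suml -sumrN; apply: eq_bigr => i _.
by rewrite -scalerN -brN.
Qed.

Lemma gVT : gV^T = gV.
Proof.
case: HMt => _ [/eqP + _]; rewrite /form_n tr_block_mx => /eqP /eq_block_mx.
by case.
Qed.
Lemma gZT : gZ^T = gZ.
Proof.
case: HMt => _ [/eqP + _]; rewrite /form_n tr_block_mx => /eqP /eq_block_mx.
by case.
Qed.
Lemma gZU : gZ \in unitmx.
Proof. by case: HMt => _ [_ []]. Qed.
Lemma gVU : gV \in unitmx.
Proof.
case: HMt => _ [_ [+ _]]; rewrite /form_n !unitmxE det_ublock unitrM.
by case/andP.
Qed.

Lemma ipZ_bf z w : @ipZ R q gZ z w = bf gZ z w.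
Proof. by []. Qed.

Lemma ipZ_sym z w : @ipZ R q gZ z w = @ipZ R q gZ w z.
Proof. exact: bf_sym gZT. Qed.

Lemma bf_sumr (F : fieldType) n (G : 'M[F]_n) I (r : seq I) (P : pred I) (c : I -> F) (s : I -> 'rV_n) u :
  bf G u (\sum_(i <- r | P i) c i *: s i) = \sum_(i <- r | P i) c i * bf G u (s i).
Proof.
apply: (big_rec2 (fun x w => bf G u x = w)); first exact: bf0r.
by move=> i y1 y2 _ <-; rewrite bfDr.
Qed.

Notation J := (@Jmap R m q br gV gZ).

Lemma Jfact z a b : bf gV (a *m J z) b = @ipZ R q gZ z (br a b).
Proof.
rewrite /bf /Jmap -!mulmxA. rewrite mulKmx; last exact: gVU. rewrite mulmxA [LHS]mxE.
under eq_bigr do rewrite mxE mulr_suml.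
rewrite exchange_big /=.
rewrite [in br a b](row_sum_delta a) br_suml ipZ_bf bf_sumr; apply: eq_bigr => i _.
rewrite [in br _ b](row_sum_delta b) br_sumr bf_sumr mulr_sumr; apply: eq_bigr => j _.
by rewrite !mxE -mulrA; congr (_ * _); rewrite mulrC.
Qed.

Lemma Jlin (c : R) z z' : J (c *: z + z') = c *: J z + J z'.
Proof.
rewrite /Jmap scalemxAl -mulmxDl; congr (_ *m _).
by apply/matrixP => i j; rewrite !mxE /ipZ -!/(bf _ _ _) bfDl.
Qed.

Lemma cliff z w : J z *m J w + J w *m J z = (- (2%:R * @ipZ R q gZ z w))%:M.
Proof. by case: HH => _ H; apply: H. Qed.

Lemma twice_inj n p (A B : 'M[R]_(n, p)) : A + A = B + B -> A = B.
Proof.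
move=> /eqP; rewrite -subr_eq0 opprD addrACA -mulr2n -scaler_nat.
rewrite scaler_eq0 pnatr_eq0 /= subr_eq0 => /eqP //.
Qed.

Lemma twice_injR (a b : R) : a + a = b + b -> a = b.
Proof.
move=> /eqP; rewrite -subr_eq0 opprD addrACA -mulr2n -mulr_natr mulf_eq0 pnatr_eq0 /=.
by rewrite orbF subr_eq0 => /eqP.
Qed.

Lemma Jsq z : J z *m J z = (- @ipZ R q gZ z z)%:M.
Proof.
apply: twice_inj; rewrite cliff -raddfD /=; congr (_%:M).
by rewrite -opprD mulr2n mulrDl mul1r.
Qed.

Lemma Janti z w : @ipZ R q gZ z w = 0 -> J z *m J w = - (J w *m J z).
Proof.
move=> h; have := cliff z w; rewrite h mulr0 oppr0 raddf0 => /eqP.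
by rewrite addr_eq0 => /eqP.
Qed.

Lemma bfV_sym a b : bf gV a b = bf gV b a.
Proof. exact: bf_sym gVT. Qed.

Lemma skewJ z a b : bf gV (a *m J z) b = - bf gV (b *m J z) a.
Proof. by rewrite !Jfact brN /ipZ -!/(bf _ _ _) bfNr. Qed.

Lemma skewJ2 z a b : bf gV (a *m J z) b = - bf gV a (b *m J z).
Proof. by rewrite skewJ bfV_sym. Qed.

Lemma JJ z a b : bf gV (a *m J z) (b *m J z) = @ipZ R q gZ z z * bf gV a b.
Proof.
by rewrite skewJ2 -mulmxA Jsq mul_mx_scalar bfZr mulNr opprK.
Qed.

Lemma ipZ_nondeg u u' : (forall zeta, @ipZ R q gZ zeta u = @ipZ R q gZ zeta u') -> u = u'.
Proof.
move=> h; apply/eqP; rewrite -subr_eq0; apply/eqP; apply: (bf_nondeg gZU) => w.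
by rewrite bfBl -!ipZ_bf ipZ_sym h -ipZ_sym subrr.
Qed.

Lemma bfV_nondeg u u' : (forall w, bf gV u w = bf gV u' w) -> u = u'.
Proof.
move=> h; apply/eqP; rewrite -subr_eq0; apply/eqP; apply: (bf_nondeg gVU) => w.
by rewrite bfBl h subrr.
Qed.

Lemma ipZ_Zr z (c : R) w : @ipZ R q gZ z (c *: w) = c * @ipZ R q gZ z w.
Proof. exact: bfZr. Qed.

Lemma brJ z y : br y (y *m J z) = bf gV y y *: z.
Proof.
apply: ipZ_nondeg => zeta.
rewrite -Jfact ipZ_Zr.
set s := bf gV _ _.
have h1 : s = - bf gV y (y *m J z *m J zeta) by rewrite /s skewJ2.
have h2 : s = - bf gV y (y *m J zeta *m J z) by rewrite /s bfV_sym skewJ2.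
apply: twice_injR; rewrite {1}h1 h2 -opprD -bfAr -[y *m J z *m _]mulmxA -[y *m J zeta *m _]mulmxA -mulmxDr.
rewrite [J z *m _ + _]addrC cliff mul_mx_scalar bfZr (ipZ_sym zeta).
by rewrite mulNr opprK mulr2n !mulrDl mul1r mulrC.
Qed.

Lemma two_neq0 : (2%:R : R) != 0.
Proof. by rewrite pnatr_eq0. Qed.

Hypothesis Hq : (3 <= q)%N.

Lemma m_pos : (0 < m)%N.
Proof.
rewrite lt0n; apply/negP => /eqP m0.
have x0 (x : 'rV[R]_m) : x = 0 by apply/rowP => -[i hi]; exfalso; have := hi; by rewrite m0.
have q0 : (0 < q)%N by apply: leq_trans Hq.
have [s Hs] := br_span (delta_mx 0 (Ordinal q0)).
have : (delta_mx 0 (Ordinal q0) : 'rV[R]_q) = 0.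
  by rewrite Hs big1 // => p _; rewrite (x0 p.1.2) br0l scaler0.
move/rowP/(_ (Ordinal q0)); rewrite !mxE !eqxx /= => /eqP.
by rewrite oner_eq0.
Qed.

Lemma exists_nonnullV : exists y, bf gV y y != 0.
Proof.
have [t [Ht _]] := @exists_orth R m 0 gV (fun _ => 0) gVT gVU two_neq0 m_pos
  (fun i => match i with Ordinal _ h => False_ind _ (notF h) end)
  (fun i => match i with Ordinal _ h => False_ind _ (notF h) end).
by exists t.
Qed.

Lemma triple : exists e1 e2 e3 : 'rV[R]_q,
  [/\ bf gZ e1 e1 != 0, bf gZ e2 e2 != 0, bf gZ e3 e3 != 0 &
      [/\ bf gZ e1 e2 = 0, bf gZ e1 e3 = 0 & bf gZ e2 e3 = 0]].
Proof.
have q0 : (0 < q)%N by apply: leq_trans Hq.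
have [e1 [He1 _]] := @exists_orth R q 0 gZ (fun _ => 0) gZT gZU two_neq0 q0
  (fun i => match i with Ordinal _ h => False_ind _ (notF h) end)
  (fun i => match i with Ordinal _ h => False_ind _ (notF h) end).
have q1 : (1 < q)%N by apply: leq_trans Hq.
have [e2 [He2 H12]] : exists t, bf gZ t t != 0 /\ forall i : 'I_1, bf gZ t e1 = 0.
  apply: (@exists_orth R q 1 gZ (fun _ => e1) gZT gZU two_neq0 q1 (fun _ => He1)).
  by move=> i j; rewrite !ord1 eqxx.
have {}H12 : bf gZ e1 e2 = 0 by rewrite (bf_sym _ _ gZT); apply: (H12 ord0).
pose s (i : 'I_2) := if val i == 0%N then e1 else e2.
have [e3 [He3 H3]] : exists t, bf gZ t t != 0 /\ forall i, bf gZ t (s i) = 0.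
  apply: (@exists_orth R q 2 gZ s gZT gZU two_neq0 Hq).
  - by move=> [[|[|i]] hi] //; rewrite /s.
  - move=> [[|[|i]] hi] [[|[|j]] hj] //=; rewrite /s //=.
    by rewrite (bf_sym _ _ gZT).
exists e1, e2, e3; split => //; split => //.
- by rewrite (bf_sym _ _ gZT); apply: (H3 ord0).
- by rewrite (bf_sym _ _ gZT); apply: (H3 (Ordinal (isT : (1 < 2)%N))).
Qed.

Lemma J_opp_row (u : 'rV[R]_m) z : - u *m J z = - (u *m J z).
Proof. by rewrite mulNmx. Qed.

Section L2pair.
Variable f : 'rV[R]_q -> 'rV[R]_m.
Variable B : 'rV[R]_m -> 'rV[R]_m -> 'rV[R]_m.
Hypothesis Hf : forall (a : R) z z', f (a *: z + z') = a *: f z + f z'.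
Hypothesis HBN : forall x u, B x (- u) = - B x u.
Hypothesis HE : forall x y y', br (f (br y y')) x = br (B x y) y' - br (B x y') y.

Lemma f0 : f 0 = 0.
Proof.
have := Hf 1 0 0; rewrite !scale1r addr0 => h.
by apply: (addrI (f 0)); rewrite addr0 -h.
Qed.
Lemma fZ (a : R) z : f (a *: z) = a *: f z.
Proof. by rewrite -[a *: z]addr0 Hf f0 addr0. Qed.

Lemma Ieq x z y :
  bf gV y y * @ipZ R q gZ z (br (f z) x) =
  @ipZ R q gZ z z * bf gV (B x y) y + bf gV (B x (y *m J z)) (y *m J z).
Proof.
have := congr1 (@ipZ R q gZ z) (HE x y (y *m J z)).
rewrite brJ fZ brZl ipZ_Zr => ->.
rewrite ipZ_bf bfBr -!ipZ_bf -!Jfact JJ skewJ2.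
by rewrite opprK.
Qed.

Lemma L2pair z z' : @ipZ R q gZ z z' = 0 ->
  @ipZ R q gZ z' z' *: (f z *m J z) = @ipZ R q gZ z z *: (f z' *m J z').
Proof.
move=> zz'; apply: bfV_nondeg => x; rewrite !bfZl !Jfact.
have [y Hy] := exists_nonnullV.
pose qq u := bf gV (B x u) u.
have qN u : qq (- u) = qq u by rewrite /qq HBN bfNl bfNr opprK.
have E1 := Ieq x z y; have E2 := Ieq x z' y.
have E3 := Ieq x z' (y *m J z); have E4 := Ieq x z (y *m J z').
rewrite JJ in E3; rewrite JJ in E4.
have r : y *m J z *m J z' = - (y *m J z' *m J z).
  by rewrite -[y *m J z *m _]mulmxA -[y *m J z' *m _]mulmxA Janti // mulmxN.
rewrite r HBN bfNl bfNr opprK in E3.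
set az := @ipZ R q gZ z (br (f z) x) in E1 E4 *.
set az' := @ipZ R q gZ z' (br (f z') x) in E2 E3 *.
set e := @ipZ R q gZ z z in E1 E3 E4 *.
set e' := @ipZ R q gZ z' z' in E2 E3 E4 *.
set n := bf gV y y in Hy E1 E2 E3 E4.
have H : 2%:R * (n * (e' * az - e * az')) =
   e' * (n * az - (e * qq y + qq (y *m J z))) - e * (n * az' - (e' * qq y + qq (y *m J z')))
   - ((e * n) * az' - (e' * qq (y *m J z) + qq (y *m J z' *m J z)))
   + ((e' * n) * az - (e * qq (y *m J z') + qq (y *m J z' *m J z))).
  by ring.
rewrite /qq in H.
rewrite -E1 -E2 -E3 -E4 !subrr !mulr0 !subrr ?addr0 in H.
move/eqP: H; rewrite mulf_eq0 (negbTE two_neq0) /= mulf_eq0 (negbTE Hy) /=.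
by rewrite subr_eq0 => /eqP.
Qed.

Lemma fz_from (z e : 'rV[R]_q) : @ipZ R q gZ z z != 0 -> @ipZ R q gZ e e != 0 ->
  @ipZ R q gZ z e = 0 ->
  f z = (- (@ipZ R q gZ e e)^-1 *: (f e *m J e)) *m J z.
Proof.
move=> nz ne ze.
have H := L2pair ze.
have E : f z = - (@ipZ R q gZ z z)^-1 *: (f z *m J z *m J z).
  by rewrite -mulmxA Jsq mul_mx_scalar scalerA mulNr mulrN mulVf // opprK scale1r.
rewrite E.
have H2 : f z *m J z = ((@ipZ R q gZ e e)^-1 * @ipZ R q gZ z z) *: (f e *m J e).
  by rewrite -scalerA -H scalerA mulVf // scale1r.
by rewrite H2 -!scalemxAl scalerA; congr (_ *: _); rewrite mulNr mulrCA mulVf // mulr1.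
Qed.

Lemma L2full (e s : 'rV[R]_q) : @ipZ R q gZ e e != 0 -> @ipZ R q gZ s s != 0 ->
  @ipZ R q gZ e s = 0 ->
  forall z, f z = (- (@ipZ R q gZ e e)^-1 *: (f e *m J e)) *m J z.
Proof.
move=> ne ns es.
set v := (- _ *: _).
have Hperp z : @ipZ R q gZ z z != 0 -> @ipZ R q gZ z e = 0 -> f z = v *m J z.
  by move=> nz ze; apply: fz_from.
have Hs : f s = v *m J s by apply: Hperp => //; rewrite ipZ_sym.
have Hperp' z : @ipZ R q gZ z e = 0 -> f z = v *m J z.
  move=> ze.
  pose p (l : R) := @ipZ R q gZ (l *: s + z) (l *: s + z).
  have pE l : p l = l * l * @ipZ R q gZ s s + 2%:R * l * @ipZ R q gZ z s + @ipZ R q gZ z z.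
    rewrite /p !ipZ_bf bfDl !bfDr -!ipZ_bf (ipZ_sym s z); ring.
  have [l Hl] : exists l, p l != 0.
    apply: NNPP => hn.
    have h l : p l = 0 by apply/eqP; apply: NNPP => hl; apply: hn; exists l; apply/negP.
    have := h 1; have := h 2%:R; have := h 3%:R; rewrite !pE => h3 h2 h1.
    have : 2%:R * @ipZ R q gZ s s = 0.
      have -> : 2%:R * @ipZ R q gZ s s = (3%:R * 3%:R * @ipZ R q gZ s s + 2%:R * 3%:R * @ipZ R q gZ z s + @ipZ R q gZ z z) - 2%:R * (2%:R * 2%:R * @ipZ R q gZ s s + 2%:R * 2%:R * @ipZ R q gZ z s + @ipZ R q gZ z z) + (1 * 1 * @ipZ R q gZ s s + 2%:R * 1 * @ipZ R q gZ z s + @ipZ R q gZ z z) by ring.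
      by rewrite h3 h2 h1; ring.
    by move/eqP; rewrite mulf_eq0 (negbTE two_neq0) (negbTE ns).
  have Hl' : f (l *: s + z) = v *m J (l *: s + z).
    apply: Hperp => //; rewrite ipZ_bf bfDl -!ipZ_bf (ipZ_sym s e) es ze; ring.
  by move: Hl'; rewrite Hf Jlin Hs mulmxDr -scalemxAr => /addrI.
move=> z.
pose c := @ipZ R q gZ z e / @ipZ R q gZ e e.
have -> : z = c *: e + (z - c *: e) by rewrite addrC subrK.
rewrite Hf Jlin mulmxDr -scalemxAr.
have He : f e = v *m J e.
  rewrite /v -scalemxAl -[f e *m J e *m _]mulmxA Jsq mul_mx_scalar scalerA. by rewrite mulrNN mulVf // scale1r.
rewrite He Hperp' //.
rewrite ipZ_bf bfBl bfZl -!ipZ_bf /c mulfVK // subrr.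
by [].
Qed.

End L2pair.

Lemma rowJJ (u : 'rV[R]_m) z : u *m J z *m J z = (- @ipZ R q gZ z z) *: u.
Proof. by rewrite -mulmxA Jsq mul_mx_scalar. Qed.

Lemma scaleJ (u : 'rV[R]_m) (c : R) z : (c *: u) *m J z = c *: (u *m J z).
Proof. by rewrite scalemxAl. Qed.

Lemma rowAnti (u : 'rV[R]_m) z w : @ipZ R q gZ z w = 0 ->
  u *m J z *m J w = - (u *m J w *m J z).
Proof.
by move=> h; rewrite -[u *m J z *m _]mulmxA -[u *m J w *m _]mulmxA Janti // mulmxN.
Qed.

Section L1.
Variable B : 'rV[R]_m -> 'rV[R]_m -> 'rV[R]_m.
Hypothesis HBs : forall a b, B a b = B b a.
Hypothesis HE0 : forall x y y', br (B x y) y' = br (B x y') y.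

Lemma L1 (e1 e2 e3 : 'rV[R]_q) :
  @ipZ R q gZ e1 e1 != 0 -> @ipZ R q gZ e2 e2 != 0 -> @ipZ R q gZ e3 e3 != 0 ->
  @ipZ R q gZ e1 e2 = 0 -> @ipZ R q gZ e1 e3 = 0 -> @ipZ R q gZ e2 e3 = 0 ->
  forall a b, B a b = 0.
Proof.
move=> n1 n2 n3 o12 o13 o23.
pose D a b c := bf gV (B a b) c.
have R2 z a b c : D a b (c *m J z) = D a c (b *m J z).
  have := congr1 (@ipZ R q gZ z) (HE0 a b c); rewrite -!Jfact !skewJ2.
  by move/oppr_inj.
set ee2 := @ipZ R q gZ e2 e2 in n2.
pose K (u : 'rV[R]_m) := u *m J e1 *m J e2 *m J e3.
have key a b c : D a b (K c) = - D a c (K b).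
  rewrite /K (R2 e3 a b (c *m J e1 *m J e2)).
  pose w := - ee2^-1 *: (b *m J e3 *m J e2).
  have hw : w *m J e2 = b *m J e3.
    by rewrite /w scaleJ rowJJ scalerA mulrNN mulVf // scale1r.
  rewrite -hw (R2 e2 a (c *m J e1 *m J e2) w) rowJJ /D bfZr -/(D a w (c *m J e1)).
  rewrite (R2 e1 a w c) /w scaleJ /D bfZr.
  rewrite -/ee2 mulrA mulrNN mulfV // mul1r.
  have -> : b *m J e3 *m J e2 *m J e1 = - (b *m J e1 *m J e2 *m J e3).
    rewrite (@rowAnti b e3 e2) ?(ipZ_sym e3) // mulNmx.
    rewrite (@rowAnti (b *m J e2) e3 e1) ?(ipZ_sym e3) // opprK.
    by rewrite (@rowAnti b e2 e1) ?(ipZ_sym e2) // mulNmx.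
  by rewrite bfNr.
have Y0 a b c : D a b (K c) = 0.
  have s1 x y z : D x y (K z) = D y x (K z) by rewrite /D HBs.
  have h1 := key a b c; have h2 := s1 a c b; have h3 := key c a b.
  have h4 := s1 c b a; have h5 := key b c a; have h6 := s1 b a c.
  lra.
move=> a b; apply: (bf_nondeg gVU) => w'.
set k := (- @ipZ R q gZ e1 e1) * ((- ee2) * (- @ipZ R q gZ e3 e3)).
have kn : k != 0 by rewrite /k !mulf_neq0 // oppr_eq0.
have hK : K (w' *m J e3 *m J e2 *m J e1) = k *: w'.
  rewrite /K rowJJ scaleJ rowJJ scaleJ scaleJ rowJJ -/ee2 !scalerA /k.
  congr (_ *: _); ring.
have -> : w' = k^-1 *: K (w' *m J e3 *m J e2 *m J e1) by rewrite hK scalerA mulVf // scale1r.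
by rewrite bfZr -/(D a b _) Y0 mulr0.
Qed.
End L1.

Notation lv := (@lvl R m q).
Notation lz := (@lzero R m q).
Notation tk := (@tanaka R m q br).

Lemma lzero_ops n (a : R) :
  ((lscale2 R m q n a).1 (lzero2 R m q n).1 = (lzero2 R m q n).1 /\
   (lscale2 R m q n a).2 (lzero2 R m q n).2 = (lzero2 R m q n).2) /\
  ((ladd2 R m q n).1 (lzero2 R m q n).1 (lzero2 R m q n).1 = (lzero2 R m q n).1 /\
   (ladd2 R m q n).2 (lzero2 R m q n).2 (lzero2 R m q n).2 = (lzero2 R m q n).2).
Proof.
elim: n => [|k [[IH1 IH2] [IH3 IH4]]] /=.
  by rewrite !scaler0 !addr0.
split; split => //.
- by congr pair; apply: functional_extensionality => x; rewrite ?IH1 ?IH2.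
- by congr pair; apply: functional_extensionality => x; rewrite ?IH3 ?IH4.
Qed.

Lemma lscale0 n (a : R) : @lscale R m q n a (lz n) = lz n.
Proof. exact: (proj1 (proj1 (lzero_ops n a))). Qed.
Lemma ladd0 n : @ladd R m q n (lz n) (lz n) = lz n.
Proof. exact: (proj1 (proj2 (lzero_ops n 0))). Qed.

Lemma lin_zero n (g : 'rV[R]_q -> lv n) : @linZ R m q n g ->
  (forall x y, g (br x y) = lz n) -> forall z, g z = lz n.
Proof.
move=> lg hg z; have [s ->] := br_span z.
elim: s => [|p s IH]; first by rewrite big_nil -(br0l 0) hg.
by rewrite big_cons lg hg IH lscale0 ladd0.
Qed.

Lemma step_zero k : (forall v : lv k.+2, tk k v -> v = lz k.+2) ->
  forall u : lv k.+3, tk k.+1 u -> u = lz k.+3.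
Proof.
move=> IH [u1 u2] [lV lZ Hx Hz [dVV dVZ dZZ]].
have h1 x : u1 x = lz k.+2 by apply: IH; apply: Hx.
have h2 : forall z, u2 z = lz k.+1.
  apply: (@lin_zero k.+1 u2 lZ) => x y; have := dVV x y; rewrite /= !h1 => ->.
  by rewrite /lopp lscale0 ladd0.
by congr pair; apply: functional_extensionality => x; rewrite ?h1 ?h2.
Qed.

Lemma P1 (w : lv 3) : tk 1 w -> (forall z, w.2 z = 0) -> w = lz 3.
Proof.
move: w => [w1 w2] [lV lZ Hx Hz [dVV dVZ dZZ]] /= h0.
pose B x y := (w1 x).1 y.
have HBs a b : B a b = B b a.
  have := dVV a b; rewrite /= h0 /lopp /lscale /ladd /= scaleN1r => /eqP.
  by rewrite eq_sym subr_eq0 => /eqP.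
have HE0 x y y' : br (B x y) y' = br (B x y') y.
  have [_ _ _ _ [dVV0 _ _]] := Hx x.
  have := dVV0 y y'; rewrite /= /lopp /lscale /ladd /= scaleN1r.
  have := dVZ x (br y y'); rewrite /= h0 br0l => -> /eqP.
  by rewrite eq_sym subr_eq0 => /eqP.
have [e1 [e2 [e3 [n1 n2 n3 [o12 o13 o23]]]]] := triple.
have B0 := L1 HBs HE0 n1 n2 n3 o12 o13 o23.
congr pair; apply: functional_extensionality => x.
  have := dVZ x; move: (B0 x); rewrite /B /=.
  case: (w1 x) => f1 f2 /= hf1 hf2.
  congr pair; apply: functional_extensionality => y //.
  by rewrite hf2 /= h0 br0l.
by rewrite h0.
Qed.

Lemma P2 (u : lv 4) : tk 2 u -> (forall z, u.2 z = lz 2) -> u = lz 4.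
Proof.
move: u => [u1 u2] [lV lZ Hx Hz [dVV dVZ dZZ]] /= h0.
have h1 x : u1 x = lz 3.
  apply: P1; first exact: Hx.
  by move=> z; rewrite dVZ /= h0.
by congr pair; apply: functional_extensionality => x; rewrite ?h1 ?h0.
Qed.

Lemma lin_neg (U V : lmodType R) (g : U -> V) :
  (forall (a : R) x y, g (a *: x + y) = a *: g x + g y) -> forall x, g (- x) = - g x.
Proof.
move=> lg x.
have g0 : g 0 = 0.
  have := lg 1 0 0; rewrite !scale1r addr0 => h.
  by apply: (addrI (g 0)); rewrite addr0 -h.
by rewrite -[- x]addr0 -scaleN1r lg g0 addr0 scaleN1r.
Qed.

Lemma g3zero (y : lv 5) : tk 3 y -> y = lz 5.
Proof.
move: y => [y1 y2] [lV lZ Hx Hz [dVV dVZ dZZ]] /=.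
have [e1 [e2 [e3 [n1 n2 n3 [o12 o13 o23]]]]] := triple.
pose Psi z z' := (y2 z).2 z'.
have Psym z z' : Psi z z' = Psi z' z by apply: dZZ.
have [v Hv] : exists v : 'rV[R]_q -> 'rV[R]_m, forall a z, Psi a z = v a *m J z.
  exists (fun a => - (@ipZ R q gZ e1 e1)^-1 *: (Psi a e1 *m J e1)) => a z.
  have Ha : tk 1 (y2 a) := Hz a.
  rewrite /Psi /=; move: (y2 a) Ha => [w1 w2] [lV1 lZ1 Hx1 Hz1 [dVV1 dVZ1 dZZ1]] /=.
  pose B x u := (w1 x).1 u.
  have Hf : forall (c : R) z z', w2 (c *: z + z') = c *: w2 z + w2 z'.
    by move=> c t t'; have := lZ1 c t t'.
  have HBN x u : B x (- u) = - B x u.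
    have [lin _ _ _ _] := Hx1 x.
    by apply: lin_neg => c b b'; have := lin c b b'.
  have HE x u u' : br (w2 (br u u')) x = br (B x u) u' - br (B x u') u.
    have [_ _ _ _ [dVV0 _ _]] := Hx1 x.
    have h := dVZ1 x (br u u'); rewrite /= in h; rewrite -h dVV0 /=.
    by rewrite /lopp /lscale /ladd /= scaleN1r.
  exact: (L2full Hf HBN HE n1 n2 o12).
have sym a z : v a *m J z = v z *m J a by rewrite -!Hv Psym.
have Jinv (u : 'rV[R]_m) : u = - (@ipZ R q gZ e1 e1)^-1 *: (u *m J e1 *m J e1).
  by rewrite rowJJ scalerA mulrNN mulVf // scale1r.
have ve2 : v e2 = - (@ipZ R q gZ e1 e1)^-1 *: (v e1 *m J e2 *m J e1).
  by rewrite {1}(Jinv (v e2)) (sym e2 e1).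
have ve3 : v e3 = - (@ipZ R q gZ e1 e1)^-1 *: (v e1 *m J e3 *m J e1).
  by rewrite {1}(Jinv (v e3)) (sym e3 e1).
have o21 : @ipZ R q gZ e2 e1 = 0 by rewrite ipZ_sym.
have o31 : @ipZ R q gZ e3 e1 = 0 by rewrite ipZ_sym.
have o32 : @ipZ R q gZ e3 e2 = 0 by rewrite ipZ_sym.
have X0 : v e1 *m J e1 *m J e2 *m J e3 = 0.
  have := sym e2 e3; rewrite ve2 ve3 scaleJ scaleJ => /eqP.
  rewrite -subr_eq0 -scalerBr scaler_eq0 oppr_eq0 invr_eq0 (negbTE n1) /=. rewrite (@rowAnti (v e1) e2 e1) // mulNmx (@rowAnti (v e1) e3 e1) // mulNmx.
  rewrite (@rowAnti (v e1 *m J e1) e3 e2) // opprK -opprD oppr_eq0 -mulr2n -scaler_nat.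
  by rewrite scaler_eq0 pnatr_eq0 /= => /eqP.
have v10 : v e1 = 0.
  have := congr1 (fun u => u *m J e3 *m J e2 *m J e1) X0.
  rewrite /= !mul0mx rowJJ scaleJ scaleJ rowJJ scaleJ rowJJ !scalerA => /eqP.
  rewrite scaler_eq0 !mulf_eq0 !oppr_eq0 (negbTE n1) (negbTE n2) (negbTE n3) /=.
  by move/eqP.
have v0 z : v z = 0.
  by rewrite (Jinv (v z)) (sym z e1) v10 !mul0mx scaler0.
have y20 z : y2 z = lz 3.
  apply: P1; first exact: Hz.
  by move=> z'; rewrite -/(Psi z z') Hv v0 mul0mx.
have y10 x : y1 x = lz 4.
  apply: P2; first exact: Hx.
  by move=> z; rewrite dVZ /= y20.
by congr pair; apply: functional_extensionality => x; rewrite ?y10 ?y20.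
Qed.

Lemma rigid_main : @rigid R m q br.
Proof.
exists 3 => k hk u Hu.
have [j kj] : exists j, k = (j + 3)%N by exists (k - 3)%N; rewrite subnK.
subst k.
elim: j u Hu {hk} => [|j IH] u Hu; first exact: g3zero.
exact: (step_zero IH).
Qed.

End Basic.

Unset Implicit Arguments.

Theorem corollary3p7 (R : realType) (m q : nat)
    (br : 'rV[R]_m -> 'rV[R]_m -> 'rV[R]_q) (gV : 'M[R]_m) (gZ : 'M[R]_q) :
  @pseudo_Htype R m q br gV gZ -> (3 <= q)%N -> @rigid R m q br.
Proof. move=> H Hq; exact: rigid_main H Hq. Qed.
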